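(* Let $\mathbb N$ be a symmetric directed graph on $m$ vertices (no self-arcs) with arcs enumerated $e_1,\dots,e_d$, each arc $e_k$ carrying a real matrix $C_{e_k}$ with $n$ columns and orthonormal rows. Let $\mathbb G$ be a symmetric spanning subgraph of $\mathbb N$, $J_{\mathbb G}$ its spanning incidence matrix, $w_1,\dots,w_d$ its spanning Metropolis weights, $\bar J_{\mathbb G}=J_{\mathbb G}\otimes I_n$, and $\Lambda_{\mathbb G}=\operatorname{blockdiag}(w_1C_{e_1}'C_{e_1},\dots,w_dC_{e_d}'C_{e_d})$. Then all eigenvalues of the symmetric matrix $A_{\mathbb G}=I_{mn}-\tfrac12\bar J_{\mathbb G}\Lambda_{\mathbb G}\bar J_{\mathbb G}'$ lie in $(-1,1]$. If moreover $\mathbb G=\mathbb N$ and $\bar{\mathbb N}$ is well-configured, then $A_{\mathbb N}$ has exactly $n$ eigenvalues equal to $1$ (with multiplicity) and all other eigenvalues lie in $(-1,1)$.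
   Context: A directed graph is symmetric if whenever $(i,j)$ is an arc so is $(j,i)$. Spanning incidence matrix: $J_{\mathbb G}\in\mathbb R^{m\times d}$ whose column $k$ has $+1$ in row $i$ and $-1$ in row $j$ if $e_k=(j,i)$ is an arc of $\mathbb G$, and is zero if $e_k$ is not an arc of $\mathbb G$ (for $\mathbb G=\mathbb N$ this is the ordinary incidence matrix). Spanning Metropolis weights: if $e_k=(j,i)$ is an arc of $\mathbb G$, $w_k=1/(1+\max\{\bar d_i,\bar d_j\})$ where $\bar d_v$ is the number of neighbors of $v$ in $\mathbb G$; otherwise $w_k=0$. $'$ denotes transpose. $\bar{\mathbb N}$ is well-configured if for all $x_1,\dots,x_m\in\mathbb R^n$, $C_{ji}x_i=C_{ji}x_j$ for every arc $(j,i)$ of $\mathbb N$ implies $x_1=\cdots=x_m$. *)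

(* Defs.v *)
From HB Require Import structures.
From mathcomp Require Import all_boot all_order all_algebra.
From mathcomp Require Import reals.
From mathcomp.real_closed Require Import mxtens.
Set Implicit Arguments. Unset Strict Implicit. Unset Printing Implicit Defensive.
Import Order.TTheory GRing.Theory Num.Theory.
Local Open Scope ring_scope.

(* A directed graph on vertices 'I_m whose arcs are enumerated e_1..e_d by
   e : 'I_d -> 'I_m * 'I_m ; e k = (j, i) means arc e_k goes from j to i.
   A spanning subgraph G is given by the set g of arcs of N that belong to G. *)

Definition nbr_count (m d : nat) (e : 'I_d -> 'I_m * 'I_m) (g : pred 'I_d)
    (v : 'I_m) : nat :=
  #|[set u : 'I_m | [exists k : 'I_d, g k && (e k == (u, v))]]|.

Definition metropolis_w (R : realType) (m d : nat) (e : 'I_d -> 'I_m * 'I_m)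
    (g : pred 'I_d) (k : 'I_d) : R :=
  if g k then
    1 / (1 + (maxn (nbr_count e g (e k).2) (nbr_count e g (e k).1))%:R)
  else 0.
Arguments metropolis_w {R m d} e g k.

Definition span_incidence (R : realType) (m d : nat) (e : 'I_d -> 'I_m * 'I_m)
    (g : pred 'I_d) : 'M[R]_(m, d) :=
  \matrix_(v, k)
    (if g k then
       (if v == (e k).2 then 1 else if v == (e k).1 then -1 else 0)
     else 0).
Arguments span_incidence {R m d} e g.

Definition Lambda_mx (R : realType) (m n d : nat) (e : 'I_d -> 'I_m * 'I_m)
    (g : pred 'I_d) (p : 'I_d -> nat) (C : forall k : 'I_d, 'M[R]_(p k, n))
    : 'M[R]_(d * n) :=
  \sum_(k < d) (delta_mx k k *t (metropolis_w e g k *: ((C k)^T *m C k))).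

Definition A_mx (R : realType) (m n d : nat) (e : 'I_d -> 'I_m * 'I_m)
    (g : pred 'I_d) (p : 'I_d -> nat) (C : forall k : 'I_d, 'M[R]_(p k, n))
    : 'M[R]_(m * n) :=
  let Jbar := span_incidence e g *t (1%:M : 'M[R]_n) in
  1%:M - (1 / 2) *: (Jbar *m Lambda_mx e g C *m Jbar^T).

Definition well_configured (R : realType) (m n d : nat) (e : 'I_d -> 'I_m * 'I_m)
    (p : 'I_d -> nat) (C : forall k : 'I_d, 'M[R]_(p k, n)) : Prop :=
  forall x : 'I_m -> 'cV[R]_n,
    (forall k : 'I_d, C k *m x (e k).2 = C k *m x (e k).1) ->
    forall i j : 'I_m, x i = x j.

(* Main.v *)
Require Import Defs.
From HB Require Import structures.
From mathcomp Require Import all_boot all_order all_algebra.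
From mathcomp Require Import reals.
From mathcomp.real_closed Require Import mxtens.
From mathcomp Require Import ring lra.
Set Implicit Arguments. Unset Strict Implicit. Unset Printing Implicit Defensive.
Import Order.TTheory GRing.Theory Num.Theory.
Local Open Scope ring_scope.

Lemma char_poly_conj (F : fieldType) n (P A : 'M[F]_n) :
  P \in unitmx -> char_poly (invmx P *m A *m P) = char_poly A.
Proof.
move=> hP; rewrite /char_poly /char_poly_mx.
have -> : 'X%:M - map_mx polyC (invmx P *m A *m P) =
   map_mx polyC (invmx P) *m ('X%:M - map_mx polyC A) *m map_mx polyC P.
  rewrite mulmxBr mulmxBl !map_mxM; congr (_ - _).
  rewrite mul_mx_scalar -scalemxAl -map_mxM mulVmx // map_mx1.
  by rewrite scalemx1.
rewrite !det_mulmx !det_map_mx mulrC mulrA -rmorphM -det_mulmx mulmxV //.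
by rewrite det1 rmorph1 mul1r.
Qed.

Lemma core_mup (F : fieldType) r s (S : 'M[F]_(r+s)) (E : 'M_(r, r+s))
  (G : 'M_(s, r+s)) (S' : 'M_s) (a : F) :
  E *m S = a *: E -> G *m S = S' *m G -> col_mx E G \in unitmx ->
  ~~ root (char_poly S') a -> mup a (char_poly S) = r.
Proof.
move=> hE hG hP hroot.
have hS : S = invmx (col_mx E G) *m block_mx (a%:M : 'M_r) 0 0 S' *m col_mx E G.
  rewrite -mulmxA mul_block_col !mul0mx addr0 add0r mul_scalar_mx -hE -hG.
  by rewrite -mul_col_mx mulKmx.
rewrite hS char_poly_conj //.
have -> : char_poly (block_mx (a%:M : 'M_r) 0 0 S') = char_poly (a%:M : 'M_r) * char_poly S'.
  by rewrite /char_poly char_block_diag_mx det_ublock.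
rewrite (char_poly_trig (scalar_mx_is_trig _ _)).
rewrite mupMl //.
under eq_bigr do rewrite mxE eqxx mulr1n.
by rewrite prodr_const card_ord mup_XsubCX eqxx.
Qed.

Lemma core_gen (F : fieldType) N r s (eqN : (r + s)%N = N) (S : 'M[F]_N)
  (E : 'M_(r, N)) (G : 'M_(s, N)) (S' : 'M_s) (a : F) :
  E *m S = a *: E -> G *m S = S' *m G -> \rank (col_mx E G) = N ->
  ~~ root (char_poly S') a -> mup a (char_poly S) = r.
Proof.
case: N / eqN S E G => S E G hE hG hR hroot.
apply: (core_mup hE hG) => //.
by rewrite -row_full_unit /row_full hR.
Qed.

Section RealF.
Import Num.Theory.
Variable F : realFieldType.

Lemma rv_normE k (u : 'rV[F]_k) : (u *m u^T) 0 0 = \sum_j u 0 j ^+ 2.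
Proof. by rewrite !mxE; apply: eq_bigr => j _; rewrite mxE expr2. Qed.

Lemma rv_norm_ge0 k (u : 'rV[F]_k) : 0 <= (u *m u^T) 0 0.
Proof. by rewrite rv_normE; apply: sumr_ge0 => j _; apply: sqr_ge0. Qed.

Lemma rv_norm_eq0 k (u : 'rV[F]_k) : (u *m u^T) 0 0 = 0 -> u = 0.
Proof.
rewrite rv_normE => h; apply/rowP => j; rewrite mxE.
have := @psumr_eq0P _ _ predT (fun j => u 0 j ^+ 2) (fun j _ => sqr_ge0 _) h j isT.
by move/eqP; rewrite sqrf_eq0 => /eqP.
Qed.

Lemma ortho0 r N (E : 'M[F]_(r, N)) (v : 'rV_N) :
  (v <= E)%MS -> v *m E^T = 0 -> v = 0.
Proof.
move=> /submxP [w ->] h; apply: rv_norm_eq0.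
by rewrite trmx_mul mulmxA h mul0mx mxE.
Qed.

Lemma sym_mup N (S : 'M[F]_N) (a : F) :
  S^T = S -> mup a (char_poly S) = \rank (eigenspace S a).
Proof.
move=> hsym.
set E := row_base (eigenspace S a).
set K := kermx E^T.
set G := row_base K.
have hES : E *m S = a *: E by apply/eigenspaceP; rewrite eq_row_base.
have hSE : S *m E^T = a *: E^T.
  have h : S^T *m E^T = a *: E^T by rewrite -trmx_mul hES linearZ.
  by rewrite hsym in h.
have hGK : (G <= K)%MS by rewrite eq_row_base.
have hGE : G *m E^T = 0 by apply/sub_kermxP.
have hGS : (G *m S <= G)%MS.
  rewrite eq_row_base; apply/sub_kermxP.
  by rewrite -mulmxA hSE -scalemxAr hGE scaler0.
have key : forall v : 'rV_N, (v <= E)%MS -> (v <= G)%MS -> v = 0.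
  move=> v vE vG; apply: (ortho0 vE); apply/sub_kermxP.
  by rewrite -/K -(eq_row_base K).
have hcap : (E :&: G)%MS = 0.
  apply/eqP; rewrite -submx0; apply/row_subP => i; rewrite (key (row i (E :&: G)%MS)).
  - by rewrite sub0mx.
  - by apply: submx_trans (row_sub _ _) _; rewrite capmxSl.
  - by apply: submx_trans (row_sub _ _) _; rewrite capmxSr.
have rE : \rank E = \rank (eigenspace S a) by apply/eqP; apply: row_base_free.
have rG : \rank G = \rank K by apply/eqP; apply: row_base_free.
have eqN : (\rank (eigenspace S a) + \rank K)%N = N.
  by rewrite /K mxrank_ker mxrank_tr rE subnKC // rank_leq_col.
apply: (core_gen eqN hES (esym (mulmxKpV hGS))).
  by rewrite -addsmxE mxrank_disjoint_sum // rE rG.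
rewrite -eigenvalue_root_char; apply/eigenvalueP => -[w hw nz].
have h1 : (w *m G <= E)%MS.
  rewrite eq_row_base; apply/eigenspaceP.
  by rewrite -mulmxA -{1}(mulmxKpV hGS) mulmxA hw scalemxAl.
have := key _ h1 (submxMl _ _).
by move/eqP; rewrite mulmx_free_eq0 ?row_base_free // (negPf nz).
Qed.

Lemma contraction a b (D : 'M[F]_(a, b)) (z : 'rV_b) :
  D *m D^T = 1%:M -> ((z *m D^T) *m (z *m D^T)^T) 0 0 <= (z *m z^T) 0 0.
Proof.
move=> hD; set u := z *m D^T.
have h : (z - u *m D) *m (z - u *m D)^T = z *m z^T - u *m u^T.
  rewrite linearB /= trmx_mul mulmxBl !mulmxBr.
  have e1 : z *m (D^T *m u^T) = u *m u^T by rewrite mulmxA.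
  have e2 : u *m D *m z^T = u *m u^T by rewrite -mulmxA /u trmx_mul trmxK.
  have e3 : u *m D *m (D^T *m u^T) = u *m u^T.
    by rewrite -mulmxA (mulmxA D) hD mul1mx.
  by rewrite e1 e2 e3 subrr subr0.
have := rv_norm_ge0 (z - u *m D); rewrite h.
by rewrite [X in 0 <= X -> _]mxE [X in 0 <= _ + X -> _]mxE subr_ge0.
Qed.

End RealF.

Lemma sum_tens (V : nmodType) a b (F : 'I_(a * b) -> V) :
  \sum_q F q = \sum_(i < a) \sum_(l < b) F (mxtens_index (i, l)).
Proof.
rewrite pair_big /= (reindex (@mxtens_index a b)) /=.
  by apply: eq_bigr => -[i l].
by exists (@mxtens_unindex a b) => q _; rewrite ?mxtens_indexK ?mxtens_unindexK.
Qed.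

Lemma mxtens_index_eq a b (i k : 'I_a) (j l : 'I_b) :
  (mxtens_index (i, j) == mxtens_index (k, l)) = (i == k) && (j == l).
Proof. by rewrite (inj_eq (can_inj (@mxtens_indexK a b))) xpair_eqE. Qed.

Lemma tensZr (R : comPzRingType) a b c f (A : 'M[R]_(a, b)) (x : R) (B : 'M_(c, f)) :
  A *t (x *: B) = x *: (A *t B).
Proof. by apply/matrixP => i j; rewrite !mxE mulrCA. Qed.

Lemma tensZl (R : comPzRingType) a b c f (A : 'M[R]_(a, b)) (x : R) (B : 'M_(c, f)) :
  (x *: A) *t B = x *: (A *t B).
Proof. by apply/matrixP => i j; rewrite !mxE mulrA. Qed.

Lemma tens11 (R : comPzRingType) a b :
  (1%:M : 'M[R]_a) *t (1%:M : 'M[R]_b) = 1%:M.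
Proof.
apply/matrixP => i j.
case: (mxtens_indexP i) => i1 i2; case: (mxtens_indexP j) => j1 j2.
by rewrite tensmxE !mxE mxtens_index_eq -mulnb natrM.
Qed.

Section Main.
Variables (R : realType) (m n d : nat) (e : 'I_d -> 'I_m * 'I_m) (p : 'I_d -> nat)
  (C : forall k : 'I_d, 'M[R]_(p k, n)).
Variable g : pred 'I_d.

Local Notation J := (@span_incidence R m d e g).
Local Notation w := (@metropolis_w R m d e g).

Definition Yk k : 'M[R]_(m * n, 1 * p k) := col k J *t (C k)^T.
Definition Bm := (J *t (1%:M : 'M[R]_n)) *m Lambda_mx e g C *m (J *t (1%:M : 'M[R]_n))^T.

Lemma A_mxE : A_mx e g C = 1%:M - (1/2) *: Bm.
Proof. by []. Qed.

Lemma BmE : Bm = \sum_k w k *: (Yk k *m (Yk k)^T).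
Proof.
rewrite /Bm /Lambda_mx mulmx_sumr mulmx_suml; apply: eq_bigr => k _.
rewrite trmx_tens trmx1 !tensmx_mul mulmx1 mul1mx.
rewrite /Yk trmx_tens trmxK tensmx_mul tensZr; congr (_ *: (_ *t _)).
by rewrite colE trmx_mul trmx_delta !mulmxA -(mulmxA J (delta_mx k 0)) mul_delta_mx.
Qed.

Lemma quadE (v : 'rV[R]_(m * n)) :
  (v *m Bm *m v^T) 0 0 = \sum_k w k * ((v *m Yk k) *m (v *m Yk k)^T) 0 0.
Proof.
rewrite BmE mulmx_sumr mulmx_suml summxE; apply: eq_bigr => k _.
by rewrite -scalemxAr -scalemxAl mxE trmx_mul !mulmxA.
Qed.

Lemma w_ge0 k : 0 <= w k.
Proof.
rewrite /metropolis_w; case: (g k) => //.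
by rewrite div1r invr_ge0 addr_ge0 // ler0n.
Qed.

Lemma J_entry i k : J i k =
  if g k then (if i == (e k).2 then 1 else if i == (e k).1 then -1 else 0) else 0.
Proof. by rewrite /span_incidence mxE. Qed.

Hypothesis e_noloop : forall k, (e k).1 != (e k).2.

Lemma sum_J k (f : 'I_m -> R) : g k ->
  \sum_i J i k * f i = f (e k).2 - f (e k).1.
Proof.
move=> gk; rewrite (bigD1 (e k).2) //= (bigD1 (e k).1) /=; last by rewrite e_noloop.
rewrite big1 ?addr0.
  by rewrite !J_entry gk eqxx (negPf (e_noloop k)) eqxx mul1r mulN1r.
move=> i /andP [h1 h2]; rewrite J_entry gk (negPf h1) (negPf h2) mul0r //.
Qed.

Definition xv (v : 'rV[R]_(m * n)) i l := v 0 (mxtens_index (i, l)).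
Definition sv (v : 'rV[R]_(m * n)) i := \sum_l xv v i l ^+ 2.
Definition nrm k (u : 'rV[R]_k) := (u *m u^T) 0 0.

Lemma vY_split (v : 'rV[R]_(m * n)) k :
  v *m Yk k = (v *m (col k J *t (1%:M : 'M_n))) *m ((1%:M : 'M_1) *t (C k)^T).
Proof. by rewrite -mulmxA tensmx_mul mulmx1 mul1mx. Qed.

Lemma z_entry (v : 'rV[R]_(m * n)) k l :
  (v *m (col k J *t (1%:M : 'M_n))) 0 (mxtens_index (0, l)) = \sum_i J i k * xv v i l.
Proof.
rewrite mxE sum_tens; apply: eq_bigr => i _.
rewrite (bigD1 l) //= big1 ?addr0.
  by rewrite tensmxE !mxE eqxx mulr1 mulrC.
by move=> l' hl'; rewrite tensmxE !mxE (negPf hl') mulr0 mulr0.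
Qed.

Lemma z_norm (v : 'rV[R]_(m * n)) k :
  nrm (v *m (col k J *t (1%:M : 'M_n))) = \sum_l (\sum_i J i k * xv v i l) ^+ 2.
Proof.
rewrite /nrm rv_normE sum_tens big_ord1; apply: eq_bigr => l _.
by rewrite z_entry.
Qed.

Hypothesis C_orth : forall k, C k *m (C k)^T = 1%:M.

Lemma vY_bound (v : 'rV[R]_(m * n)) k : nrm (v *m Yk k) <= \sum_l (\sum_i J i k * xv v i l) ^+ 2.
Proof.
rewrite vY_split -z_norm.
have -> : (1%:M : 'M_1) *t (C k)^T = ((1%:M : 'M_1) *t C k)^T by rewrite trmx_tens trmx1.
apply: contraction.
by rewrite trmx_tens trmx1 tensmx_mul mulmx1 C_orth tens11.
Qed.

Lemma term_bound (v : 'rV[R]_(m * n)) k :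
  w k * nrm (v *m Yk k) <= w k * (2 * (sv v (e k).2 + sv v (e k).1)).
Proof.
case gk: (g k); last by rewrite /metropolis_w gk !mul0r.
apply: ler_wpM2l; first exact: w_ge0.
apply: (le_trans (vY_bound v k)).
rewrite /sv -big_split mulr_sumr /=; apply: ler_sum => l _.
rewrite sum_J //.
set a := xv v _ l; set b := xv v _ l.
have := sqr_ge0 (a + b); rewrite !expr2 => h; nra.
Qed.

Definition nbrset i := [set u : 'I_m | [exists k, g k && (e k == (u, i))]].

Lemma deg_le_m i : (nbr_count e g i <= m)%N.
Proof. by rewrite /nbr_count; apply: leq_trans (max_card _) _; rewrite card_ord. Qed.

Lemma frac_mono (a b c : R) : 0 <= a -> a <= b -> b <= c -> a / (1 + b) <= c / (1 + c).
Proof.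
move=> h0 hab hbc.
have hb : 0 < 1 + b by lra.
have hc : 0 < 1 + c by lra.
rewrite ler_pdivrMr // mulrAC ler_pdivlMr //; nra.
Qed.

Lemma wsum_gen (X Y : 'I_d -> 'I_m) i :
  (forall k, g k -> X k = i ->
     (nbr_count e g i <= maxn (nbr_count e g (e k).2) (nbr_count e g (e k).1))%N) ->
  (forall k, g k -> X k = i -> Y k \in nbrset i) ->
  {in [pred k | g k && (X k == i)] &, injective Y} ->
  \sum_(k | X k == i) w k <= m%:R / (1 + m%:R).
Proof.
move=> hmax hY hinj.
set D := nbr_count e g i.
have hw : forall k, (X k == i) && g k -> w k <= 1 / (1 + D%:R).
  move=> k /andP [/eqP xk gk]; rewrite /metropolis_w gk !div1r lef_pV2 ?posrE.
  - by rewrite lerD2l ler_nat hmax.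
  - by rewrite ltr_wpDr ?ler0n.
  - by rewrite ltr_wpDr ?ler0n.
have hcard : (#|[pred k | g k && (X k == i)]| <= D)%N.
  rewrite -(card_in_imset hinj); apply: subset_leq_card; apply/subsetP => u.
  case/imsetP => k; rewrite inE => /andP [gk /eqP xk] ->.
  by move: (hY k gk xk); rewrite inE.
rewrite (bigID g (fun k => X k == i)) /= [Z in _ + Z]big1 ?addr0; last first.
  by move=> k /andP [_ /negbTE gk]; rewrite /metropolis_w gk.
have h1 : \sum_(k | (X k == i) && g k) w k <= \sum_(k | (X k == i) && g k) (1 / (1 + D%:R)).
  by apply: ler_sum.
have h2 : \sum_(k | (X k == i) && g k) (1 / (1 + D%:R) : R) =
    (1 / (1 + D%:R) : R) *+ #|[pred k | g k && (X k == i)]|.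
  rewrite (eq_bigl (fun k => k \in [pred k | g k && (X k == i)])).
    by rewrite sumr_const.
  by move=> k; rewrite !inE andbC.
apply: le_trans h1 _; rewrite h2 -[_ *+ #|_|]mulr_natl mulrA mulr1.
apply: frac_mono; first exact: ler0n.
  by rewrite ler_nat.
by rewrite ler_nat deg_le_m.
Qed.

Hypothesis e_inj : injective e.
Hypothesis N_sym : forall k, exists k', e k' = ((e k).2, (e k).1).
Hypothesis G_sym : forall k k', g k -> e k' = ((e k).2, (e k).1) -> g k'.

Lemma wsum_head i : \sum_(k | (e k).2 == i) w k <= m%:R / (1 + m%:R).
Proof.
apply: (@wsum_gen (fun k => (e k).2) (fun k => (e k).1)).
- by move=> k _ <-; rewrite leq_maxl.
- move=> k gk xk; rewrite inE; apply/existsP; exists k; rewrite gk /= -xk.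
  by case: (e k).
- move=> k1 k2; rewrite !inE => /andP [_ /eqP h1] /andP [_ /eqP h2] h.
  apply: e_inj; rewrite [e k1]surjective_pairing [e k2]surjective_pairing.
  by rewrite h h1 h2.
Qed.

Lemma wsum_tail i : \sum_(k | (e k).1 == i) w k <= m%:R / (1 + m%:R).
Proof.
apply: (@wsum_gen (fun k => (e k).1) (fun k => (e k).2)).
- by move=> k _ <-; rewrite leq_maxr.
- move=> k gk xk; rewrite inE; apply/existsP.
  have [k' hk'] := N_sym k; exists k'.
  by rewrite (G_sym gk hk') hk' xk /= eqxx.
- move=> k1 k2; rewrite !inE => /andP [_ /eqP h1] /andP [_ /eqP h2] h.
  apply: e_inj; rewrite [e k1]surjective_pairing [e k2]surjective_pairing.
  by rewrite h h1 h2.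
Qed.

Lemma half_bound (v : 'rV[R]_(m * n)) (X : 'I_d -> 'I_m) (q : R) :
  (forall i, \sum_(k | X k == i) w k <= q) ->
  \sum_k w k * sv v (X k) <= q * \sum_i sv v i.
Proof.
move=> hq; rewrite (partition_big X xpredT) //= mulr_sumr; apply: ler_sum => i _.
have -> : \sum_(k | X k == i) w k * sv v (X k) = (\sum_(k | X k == i) w k) * sv v i.
  by rewrite mulr_suml; apply: eq_bigr => k /eqP ->.
apply: ler_wpM2r => //; rewrite /sv; apply: sumr_ge0 => l _; exact: sqr_ge0.
Qed.

Lemma nrm_sv (v : 'rV[R]_(m * n)) : nrm v = \sum_i sv v i.
Proof. by rewrite /nrm rv_normE sum_tens. Qed.

Lemma quad_bound (v : 'rV[R]_(m * n)) :
  (v *m Bm *m v^T) 0 0 <= 4 * (m%:R / (1 + m%:R)) * nrm v.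
Proof.
rewrite quadE nrm_sv.
have h0 : \sum_k w k * nrm (v *m Yk k) <=
    \sum_k w k * (2 * (sv v (e k).2 + sv v (e k).1)).
  by apply: ler_sum => k _; exact: term_bound.
apply: le_trans h0 _.
have -> : \sum_k w k * (2 * (sv v (e k).2 + sv v (e k).1)) =
  2 * (\sum_k w k * sv v (e k).2 + \sum_k w k * sv v (e k).1).
  rewrite -big_split mulr_sumr; apply: eq_bigr => k _; rewrite /=; ring.
have h1 := half_bound v wsum_head.
have h2 := half_bound v wsum_tail.
set S := \sum_i sv v i in h1 h2 *.
lra.
Qed.

Lemma quad_ge0 (v : 'rV[R]_(m * n)) : 0 <= (v *m Bm *m v^T) 0 0.
Proof.
rewrite quadE; apply: sumr_ge0 => k _; apply: mulr_ge0; first exact: w_ge0.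
exact: rv_norm_ge0.
Qed.

Lemma quadA (v : 'rV[R]_(m * n)) :
  (v *m A_mx e g C *m v^T) 0 0 = nrm v - (1/2) * (v *m Bm *m v^T) 0 0.
Proof.
rewrite A_mxE mulmxBr mulmx1 -scalemxAr mulmxBl -scalemxAl.
by rewrite [LHS]mxE [X in _ + X]mxE [X in - X]mxE.
Qed.

Lemma eig_bound a : eigenvalue (A_mx e g C) a -> -1 < a <= 1.
Proof.
case/eigenvalueP => v hv nz.
have h1 : (v *m A_mx e g C *m v^T) 0 0 = a * nrm v.
  by rewrite hv -scalemxAl mxE.
rewrite quadA in h1.
have hq := quad_bound v.
have h0 := quad_ge0 v.
have hn : 0 < nrm v.
  rewrite lt_def rv_norm_ge0 andbT; apply/eqP => h.
  by move/eqP: nz; apply; apply: rv_norm_eq0.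
have hm : m%:R / (1 + m%:R) < 1 :> R.
  by rewrite ltr_pdivrMr ?mul1r ?ltrDr ?ltr01 // ltr_wpDr ?ler0n.
have hm0 : 0 <= m%:R / (1 + m%:R) :> R.
  by rewrite divr_ge0 // ?addr_ge0 ?ler0n.
set q := m%:R / (1 + m%:R) in hq hm hm0.
set N := nrm v in h1 hq hn.
set Q := (v *m Bm *m v^T) 0 0 in h1 hq h0.
apply/andP; split; nra.
Qed.

Lemma Bm_sym : Bm^T = Bm.
Proof.
rewrite BmE linear_sum; apply: eq_bigr => k _.
by rewrite linearZ /= trmx_mul trmxK.
Qed.

Lemma A_sym : (A_mx e g C)^T = A_mx e g C.
Proof. by rewrite A_mxE linearB /= linearZ /= trmx1 Bm_sym. Qed.

Hypothesis hg : forall k, g k.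

Definition Um : 'M[R]_(1 * n, m * n) := (const_mx 1 : 'rV[R]_m) *t (1%:M : 'M[R]_n).

Lemma UY0 k : Um *m Yk k = 0.
Proof.
rewrite /Um /Yk tensmx_mul.
have -> : (const_mx 1 : 'rV[R]_m) *m col k J = 0.
  apply/matrixP => i j; rewrite !mxE.
  transitivity (\sum_l J l k * (fun _ : 'I_m => (1 : R)) l).
    by apply: eq_bigr => l _; rewrite !mxE mul1r mulr1.
  by rewrite sum_J // subrr.
by rewrite tens0mx.
Qed.

Lemma UA : Um *m A_mx e g C = Um.
Proof.
have hUB : Um *m Bm = 0.
  rewrite BmE mulmx_sumr big1 // => k _.
  by rewrite -scalemxAr mulmxA UY0 mul0mx scaler0.
by rewrite A_mxE mulmxBr mulmx1 -scalemxAr hUB scaler0 subr0.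
Qed.

Lemma U_sub : (Um <= eigenspace (A_mx e g C) 1)%MS.
Proof. by apply/eigenspaceP; rewrite scale1r UA. Qed.

Lemma vY_entry (v : 'rV[R]_(m * n)) k r :
  (v *m Yk k) 0 (mxtens_index (0, r)) = \sum_l C k r l * \sum_i J i k * xv v i l.
Proof.
rewrite mxE sum_tens.
under [RHS]eq_bigr do rewrite mulr_sumr.
rewrite [RHS]exchange_big /=; apply: eq_bigr => i _; apply: eq_bigr => l _.
rewrite tensmxE !mxE /xv; ring.
Qed.

Lemma w_gt0 k : 0 < w k.
Proof.
rewrite /metropolis_w hg div1r invr_gt0.
by rewrite ltr_wpDr ?ler0n.
Qed.

Lemma eig_sub (hm : (0 < m)%N) (wc : well_configured e C) :
  (eigenspace (A_mx e g C) 1 <= Um)%MS.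
Proof.
apply/row_subP => r; set v := row r _.
have hv : v *m A_mx e g C = 1 *: v.
  by apply/eigenspaceP; apply: submx_trans (row_sub _ _) _.
clearbody v.
have hQ : (v *m Bm *m v^T) 0 0 = 0.
  have := quadA v; rewrite hv scale1r -/(nrm v) => h.
  set Q := (v *m Bm *m v^T) 0 0 in h *.
  lra.
have hY : forall k, v *m Yk k = 0.
  move=> k; apply: rv_norm_eq0.
  move: hQ; rewrite quadE => hs.
  have := @psumr_eq0P _ _ xpredT (fun k => w k * ((v *m Yk k) *m (v *m Yk k)^T) 0 0)
    (fun k _ => mulr_ge0 (w_ge0 k) (rv_norm_ge0 _)) hs k isT.
  by move/eqP; rewrite mulf_eq0 (gt_eqF (w_gt0 k)) /= => /eqP.
pose xc i : 'cV[R]_n := \col_l xv v i l.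
have hC : forall k, C k *m xc (e k).2 = C k *m xc (e k).1.
  move=> k; apply/eqP; rewrite -subr_eq0 -mulmxBr; apply/eqP/matrixP => r' j.
  rewrite ord1.
  transitivity ((v *m Yk k) 0 (mxtens_index (0, r'))); last by rewrite hY !mxE.
  rewrite vY_entry mxE; apply: eq_bigr => l _; rewrite sum_J ?hg // !mxE.
  by [].
have hx := wc xc hC.
pose i0 := Ordinal hm.
have -> : v = (\row_q xv v i0 (@mxtens_unindex 1 n q).2) *m Um.
  apply/rowP => q; case: (mxtens_indexP q) => i l.
  rewrite [RHS]mxE sum_tens big_ord1 (bigD1 l) // big1 ?addr0.
    rewrite tensmxE !mxE mxtens_indexK /= eqxx mulr1 mulr1.
    have := congr1 (fun M : 'cV[R]_n => M l 0) (hx i0 i); rewrite !mxE addr0.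
    by move=> ->.
  by move=> l' /andP [_ hl']; rewrite tensmxE !mxE (negPf hl') mulr0 mulr0.
by apply: submxMl.
Qed.

Lemma rank_U (hm : (0 < m)%N) : \rank Um = n.
Proof.
have hUU : Um *m Um^T = (m%:R : R) *: 1%:M.
  rewrite /Um trmx_tens trmx1 tensmx_mul mulmx1.
  have -> : (const_mx 1 : 'rV[R]_m) *m (const_mx 1)^T = (m%:R : R) *: 1%:M.
    apply/matrixP => i j; rewrite !ord1 !mxE.
    under eq_bigr do rewrite !mxE mulr1.
    by rewrite sumr_const card_ord eqxx mulr1.
  by rewrite tensZl tens11.
have hu : Um *m Um^T \in unitmx.
  by rewrite hUU unitmxZ ?unitmx1 // unitfE pnatr_eq0 -lt0n.
have h1 := rank_leq_row Um.
have h2 := mxrankM_maxl Um Um^T.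
rewrite mxrank_unit // in h2.
have -> : \rank Um = (1 * n)%N by apply/eqP; rewrite eqn_leq h1 h2.
exact: mul1n.
Qed.

Lemma mup_main (hm : (0 < m)%N) (wc : well_configured e C) :
  mup 1 (char_poly (A_mx e g C)) = n.
Proof.
rewrite sym_mup ?A_sym // (@eqmx_rank _ _ _ _ _ Um) ?rank_U //.
by apply/andP; split; [exact: eig_sub | exact: U_sub].
Qed.

End Main.

Theorem lemma8 (R : realType) (m n d : nat)
  (e : 'I_d -> 'I_m * 'I_m) (p : 'I_d -> nat)
  (C : forall k : 'I_d, 'M[R]_(p k, n)) (g : pred 'I_d)
  (e_inj : injective e)
  (e_noloop : forall k, (e k).1 != (e k).2)
  (N_sym : forall k, exists k', e k' = ((e k).2, (e k).1))
  (C_orth : forall k, C k *m (C k)^T = 1%:M)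
  (G_sym : forall k k', g k -> e k' = ((e k).2, (e k).1) -> g k') :
  (forall a : R, eigenvalue (A_mx e g C) a -> -1 < a <= 1) /\
  ((0 < m)%N -> well_configured e C ->
    (mup 1 (char_poly (A_mx e predT C)) = n /\
     forall a : R, eigenvalue (A_mx e predT C) a -> a != 1 -> -1 < a < 1)).
Proof.
split.
  by move=> a; apply: eig_bound.
move=> hm wc; split.
  by apply: mup_main.
move=> a ha ne1.
have /andP [h1 h2] : -1 < a <= 1 by apply: (eig_bound (g := predT)).
by rewrite h1 lt_neqAle ne1 h2.
Qed.
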